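(* Let $\{|j\rangle\}_{j=1}^n$ be a fixed orthonormal (reference) basis of an $n$-dimensional Hilbert space, and let $Z_1,\dots,Z_n$ be Hermitian operators, all diagonal in the reference basis, with $\operatorname{tr}Z_jZ_k=\delta_{jk}$. For a state $\rho$, define \[ \mathcal{C}(\rho):=\min_{\{p_l,|\psi_l\rangle\}}\sum_lp_l\,\mathcal{F}_1\Big(e^{i\sum_j\theta_jZ_j}|\psi_l\rangle\langle\psi_l|e^{-i\sum_j\theta_jZ_j}\Big), \] where the minimum is over all ensemble decompositions $\rho=\sum_lp_l|\psi_l\rangle\langle\psi_l|$. Then \[ \mathcal{C}(\rho)=\frac4n\Big(1-\max_{\{p_l,|\psi_l\rangle\}}\sum_lp_l\sum_{j=1}^n|\langle j|\psi_l\rangle|^4\Big), \] with the maximum again over all ensemble decompositions of $\rho$.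
   Context: For a parametric family $\varrho_\theta$, $\theta\in\mathbb{R}^n$, the arithmetic-mean QFI is $\mathcal{F}_1(\varrho_\theta):=\frac1n\operatorname{tr}F(\varrho_\theta)$, where $F$ is the SLD-based QFI matrix $[F]_{jk}=\operatorname{Re}\operatorname{tr}(L_jL_k\varrho_\theta)$, with Hermitian $L_j$ satisfying $\partial_j\varrho_\theta=(L_j\varrho_\theta+\varrho_\theta L_j)/2$. (For the unitary families above, $F$ does not depend on $\theta$.) *)

(* Defs.v *)
From mathcomp Require Import all_boot all_order all_algebra.
From mathcomp Require Import boolp classical_sets reals topology normedtype derive trigo.
From mathcomp Require Import complex.
Set Implicit Arguments. Unset Strict Implicit. Unset Printing Implicit Defensive.
Import Order.TTheory GRing.Theory Num.Theory.
Import numFieldNormedType.Exports.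
Local Open Scope ring_scope.

Section QFI.
Variable R : realType.
Local Notation C := R[i].

Definition adjm (m k : nat) (A : 'M[C]_(m, k)) : 'M[C]_(k, m) :=
  map_mx (fun x : C => x^*) A^T.

Definition herm_mx (n : nat) (A : 'M[C]_n) : Prop := adjm A = A.

Definition is_state (n : nat) (rho : 'M[C]_n) : Prop :=
  [/\ herm_mx rho,
      (forall v : 'cV[C]_n, 0 <= (adjm v *m rho *m v) 0 0) &
      \tr rho = 1].

Definition ensemble (n : nat) (rho : 'M[C]_n) (m : nat)
    (p : 'I_m -> R) (psi : 'I_m -> 'cV[C]_n) : Prop :=
  [/\ (forall l, 0 <= p l), \sum_(l < m) p l = 1,
      (forall l, adjm (psi l) *m psi l = 1%:M) &
      rho = \sum_(l < m) ((p l)%:C)%C *: (psi l *m adjm (psi l))].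

Definition phase (x : R) : C := (cos x +i* sin x)%C.

(* e^{i sum_j theta_j Z_j} for Z_j Hermitian and diagonal in the reference
   basis: the diagonal matrix with entries e^{i sum_j theta_j (Z_j)_{kk}}
   (the diagonal entries are real, we take their real parts) *)
Definition Uth (n : nat) (Z : 'I_n -> 'M[C]_n) (theta : 'I_n -> R) : 'M[C]_n :=
  diag_mx (\row_k phase (\sum_(j < n) theta j * complex.Re (Z j k k))).

Definition family (n : nat) (Z : 'I_n -> 'M[C]_n) (psi : 'cV[C]_n)
    (theta : 'I_n -> R) : 'M[C]_n :=
  Uth Z theta *m (psi *m adjm psi) *m adjm (Uth Z theta).

Definition shift (n : nat) (theta : 'I_n -> R) (j : 'I_n) (t : R) : 'I_n -> R :=
  fun k => theta k + (if k == j then t else 0).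

Definition is_pderiv (n : nat) (fam : ('I_n -> R) -> 'M[C]_n)
    (theta : 'I_n -> R) (j : 'I_n) (D : 'M[C]_n) : Prop :=
  forall a b,
    is_derive (0 : R) (1 : R) (fun t => complex.Re (fam (shift theta j t) a b))
      (complex.Re (D a b)) /\
    is_derive (0 : R) (1 : R) (fun t => complex.Im (fam (shift theta j t) a b))
      (complex.Im (D a b)).

Definition is_SLD (n : nat) (fam : ('I_n -> R) -> 'M[C]_n)
    (theta : 'I_n -> R) (j : 'I_n) (L : 'M[C]_n) : Prop :=
  herm_mx L /\
  exists D, is_pderiv fam theta j D /\
            D = (2%:R : C)^-1 *: (L *m fam theta + fam theta *m L).

Definition qfi_matrix (n : nat) (fam : ('I_n -> R) -> 'M[C]_n)
    (theta : 'I_n -> R) (L : 'I_n -> 'M[C]_n) : 'M[R]_n :=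
  \matrix_(j, k) complex.Re (\tr (L j *m L k *m fam theta)).

(* v is the arithmetic-mean QFI F_1 = (1/n) tr F of the family at theta *)
Definition mean_qfi_is (n : nat) (fam : ('I_n -> R) -> 'M[C]_n)
    (theta : 'I_n -> R) (v : R) : Prop :=
  exists L : 'I_n -> 'M[C]_n,
    (forall j, is_SLD fam theta j (L j)) /\
    v = \tr (qfi_matrix fam theta L) / n%:R.

Definition qfi_values (n : nat) (Z : 'I_n -> 'M[C]_n) (theta : 'I_n -> R)
    (rho : 'M[C]_n) : set R :=
  [set x | exists m (p : 'I_m -> R) (psi : 'I_m -> 'cV[C]_n),
     ensemble rho p psi /\
     exists v : 'I_m -> R,
       (forall l, mean_qfi_is (family Z (psi l)) theta (v l)) /\
       x = \sum_(l < m) p l * v l].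

Definition Ccoh (n : nat) (Z : 'I_n -> 'M[C]_n) (theta : 'I_n -> R)
    (rho : 'M[C]_n) : R := inf (qfi_values Z theta rho).

Definition abs2 (z : C) : R := complex.Re z ^+ 2 + complex.Im z ^+ 2.

Definition ipr_values (n : nat) (rho : 'M[C]_n) : set R :=
  [set x | exists m (p : 'I_m -> R) (psi : 'I_m -> 'cV[C]_n),
     ensemble rho p psi /\
     x = \sum_(l < m) p l * \sum_(j < n) abs2 (psi l j 0) ^+ 2].

End QFI.

(* Main.v *)
Require Import Defs.
From mathcomp Require Import all_boot all_order all_algebra.
From mathcomp Require Import boolp classical_sets reals topology normedtype derive trigo.
From mathcomp Require Import complex.
From mathcomp Require Import functions realfun ring lra spectral sesquilinear.
Import Order.TTheory GRing.Theory Num.Theory.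
Import numFieldNormedType.Exports.
Local Open Scope complex_scope.
Local Open Scope ring_scope.

Section Main.
Variable R : realType.
Local Notation C := R[i].
Lemma is_derive_lin (a b : R) : is_derive (0:R) (1:R) (fun t : R => a + t * b) b.
Proof.
have h1 : is_derive (0:R) (1:R) (fun t : R => t * b) b.
  have := @is_deriveM R R id (cst b) 0 1 1 0 (is_derive_id _ _) (is_derive_cst _ _ _).
  have -> : (fun t : R => t * b) = (id * cst b : R -> R) by apply/funext.
  move=> H; refine (is_derive_eq H _).
  by rewrite scaler0 add0r /cst; exact: mulr1.
have := @is_deriveD R R R (cst a) (fun t : R => t * b) 0 1 0 b (is_derive_cst _ _ _) h1.
have -> : (fun t : R => a + t * b) = (cst a + (fun t : R => t * b)) by apply/funext.
by move=> H; refine (is_derive_eq H _); rewrite add0r.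
Qed.

Lemma is_derive_cos_lin (a b : R) :
  is_derive (0:R) (1:R) (fun t : R => cos (a + t * b)) (- sin a * b).
Proof.
have := @is_derive1_comp R cos (fun t => a + t * b) 0 (- sin a) b.
rewrite mul0r addr0 => H; exact: (H (is_derive_cos a) (is_derive_lin a b)).
Qed.

Lemma is_derive_sin_lin (a b : R) :
  is_derive (0:R) (1:R) (fun t : R => sin (a + t * b)) (cos a * b).
Proof.
have := @is_derive1_comp R sin (fun t => a + t * b) 0 (cos a) b.
rewrite mul0r addr0 => H; exact: (H (is_derive_sin a) (is_derive_lin a b)).
Qed.

Lemma is_derive_comb (f g : R -> R) (df dg p q : R) :
  is_derive (0:R) (1:R) f df -> is_derive (0:R) (1:R) g dg ->
  is_derive (0:R) (1:R) (fun t => f t * p + g t * q) (df * p + dg * q).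
Proof.
move=> Hf Hg.
have Hf' : is_derive (0:R) (1:R) (fun t => f t * p) (df * p).
  have := @is_deriveM R R f (cst p) 0 1 df 0 Hf (is_derive_cst _ _ _).
  have -> : (fun t : R => f t * p) = (f * cst p : R -> R) by apply/funext.
  by move=> H; refine (is_derive_eq H _); rewrite /cst /= scaler0 add0r mulrC.
have Hg' : is_derive (0:R) (1:R) (fun t => g t * q) (dg * q).
  have := @is_deriveM R R g (cst q) 0 1 dg 0 Hg (is_derive_cst _ _ _).
  have -> : (fun t : R => g t * q) = (g * cst q : R -> R) by apply/funext.
  by move=> H; refine (is_derive_eq H _); rewrite /cst /= scaler0 add0r mulrC.
have := @is_deriveD R R R _ _ 0 1 _ _ Hf' Hg'.
have -> : (fun t => f t * p + g t * q) = ((fun t => f t * p) + (fun t => g t * q)) by apply/funext.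
by [].
Qed.

Lemma deriv_phase_Re (a b : R) (c : C) :
  is_derive (0:R) (1:R) (fun t => complex.Re (phase (a + t * b) * c))
    (complex.Re ('i%C * (b%:C)%C * phase a * c)).
Proof.
case: c => x y.
have := @is_derive_comb _ _ _ _ x (- y) (is_derive_cos_lin a b) (is_derive_sin_lin a b).
have -> : (fun t => complex.Re (phase (a + t * b) * (x +i* y)%C)) =
   (fun t => cos (a + t * b) * x + sin (a + t * b) * - y).
  by apply/funext => t; rewrite /phase /=; ring.
move=> H; refine (is_derive_eq H _).
rewrite /phase /=. ring.
Qed.

Lemma deriv_phase_Im (a b : R) (c : C) :
  is_derive (0:R) (1:R) (fun t => complex.Im (phase (a + t * b) * c))
    (complex.Im ('i%C * (b%:C)%C * phase a * c)).
Proof.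
case: c => x y.
have := @is_derive_comb _ _ _ _ y x (is_derive_cos_lin a b) (is_derive_sin_lin a b).
have -> : (fun t => complex.Im (phase (a + t * b) * (x +i* y)%C)) =
   (fun t => cos (a + t * b) * y + sin (a + t * b) * x).
  by apply/funext => t; rewrite /phase /=; ring.
move=> H; refine (is_derive_eq H _).
rewrite /phase /=. ring.
Qed.
Lemma phaseJ x : (phase x)^* = phase (- x) :> C.
Proof. by rewrite /phase cosN sinN; apply/eqP; rewrite eq_complex /= !eqxx. Qed.

Lemma phaseM x y : phase x * phase y = phase (x + y) :> C.
Proof.
rewrite /phase cosD sinD; apply/eqP; rewrite eq_complex /=; apply/andP; split; apply/eqP; ring.
Qed.

Lemma phaseJM x : (phase x)^* * phase x = 1 :> C.
Proof. by rewrite phaseJ phaseM addNr /phase cos0 sin0. Qed.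

Lemma conjMabs2 (z : C) : z^* * z = ((abs2 z)%:C)%C.
Proof.
case: z => a b; rewrite /abs2 /=; apply/eqP; rewrite eq_complex /=; apply/andP; split; apply/eqP; ring.
Qed.

Lemma abs2_ge0 (z : C) : 0 <= abs2 z.
Proof. by rewrite /abs2 addr_ge0 // sqr_ge0. Qed.

Lemma realC_sum I (r : seq I) (P : pred I) (F : I -> R) :
  ((\sum_(i <- r | P i) F i)%:C)%C = \sum_(i <- r | P i) ((F i)%:C)%C :> C.
Proof.
elim/big_rec2: _ => [|i y1 y2 _ <-].
  by apply/eqP; rewrite eq_complex /= !eqxx.
by apply/eqP; rewrite eq_complex /= !eqxx /= addr0.
Qed.

Lemma realCM (x y : R) : ((x * y)%:C)%C = ((x%:C)%C * (y%:C)%C :> C).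
Proof. apply/eqP; rewrite eq_complex /=; apply/andP; split; apply/eqP; ring. Qed.

Lemma realCB (x y : R) : ((x - y)%:C)%C = ((x%:C)%C - (y%:C)%C :> C).
Proof. apply/eqP; rewrite eq_complex /=; apply/andP; split; apply/eqP; ring. Qed.

Lemma adjmM m k p (A : 'M[C]_(m, k)) (B : 'M[C]_(k, p)) :
  adjm (A *m B) = adjm B *m adjm A.
Proof.
apply/matrixP => i j; rewrite !mxE rmorph_sum; apply: eq_bigr => l _.
by rewrite !mxE rmorphM mulrC.
Qed.

Lemma adjmK m k (A : 'M[C]_(m, k)) : adjm (adjm A) = A.
Proof. by apply/matrixP => i j; rewrite !mxE conjCK. Qed.

Lemma adjmD m k (A B : 'M[C]_(m, k)) : adjm (A + B) = adjm A + adjm B.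
Proof. by apply/matrixP => i j; rewrite !mxE rmorphD. Qed.

Lemma adjmN m k (A : 'M[C]_(m, k)) : adjm (- A) = - adjm A.
Proof. by apply/matrixP => i j; rewrite !mxE rmorphN. Qed.

Lemma adjmB m k (A B : 'M[C]_(m, k)) : adjm (A - B) = adjm A - adjm B.
Proof. by rewrite adjmD adjmN. Qed.

Lemma adjmZ m k (c : C) (A : 'M[C]_(m, k)) : adjm (c *: A) = c^* *: adjm A.
Proof. by apply/matrixP => i j; rewrite !mxE rmorphM. Qed.

Lemma adjm_diag k (d : 'rV[C]_k) : adjm (diag_mx d) = diag_mx (map_mx Num.conj d).
Proof.
apply/matrixP => i j; rewrite !mxE rmorphMn; case: (eqVneq i j) => [->|ne] //.

Qed.

Lemma conj_i : ('i%C : C)^* = - 'i%C.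
Proof. by apply/eqP; rewrite eq_complex /= oppr0 !eqxx. Qed.

Lemma i_mulJ : ('i%C : C)^* * 'i%C = 1.
Proof. by apply/eqP; rewrite eq_complex /=; apply/andP; split; apply/eqP; ring. Qed.

Lemma two_neq0 : (2%:R : C) != 0.
Proof. by rewrite pnatr_eq0. Qed.
Lemma sld_alg k (phi : 'cV[C]_k) (Zj L : 'M[C]_k) :
  adjm phi *m phi = 1%:M -> adjm Zj = Zj -> adjm L = L ->
  'i%C *: (Zj *m (phi *m adjm phi) - (phi *m adjm phi) *m Zj) =
    (2%:R : C)^-1 *: (L *m (phi *m adjm phi) + (phi *m adjm phi) *m L) ->
  \tr (L *m L *m (phi *m adjm phi)) =
    4%:R * ((adjm phi *m (Zj *m (Zj *m phi))) 0 0 - ((adjm phi *m (Zj *m phi)) 0 0) ^+ 2).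
Proof.
move=> Hp HZ HL H.
have R1 : forall p (X : 'M[C]_(1, p)), adjm phi *m (phi *m X) = X.
  by move=> p X; rewrite mulmxA Hp mul1mx.
have HD : L *m (phi *m adjm phi) + (phi *m adjm phi) *m L =
    2%:R *: ('i%C *: (Zj *m (phi *m adjm phi) - (phi *m adjm phi) *m Zj)).
  rewrite H scalerA mulfV; first by rewrite scale1r. exact: two_neq0.
have Hs : adjm phi *m (L *m phi) = 0.
  have := congr1 (fun M => adjm phi *m (M *m phi)) HD.
  rewrite !mulmxDl !mulmxDr -!scalemxAl -!scalemxAr !mulmxBl !mulmxBr -!mulmxA ?R1 ?Hp.
  rewrite !mulmx1 subrr !scaler0 => /matrixP E.
  apply/matrixP => i j; have := E i j; rewrite !mxE => /eqP.
  by rewrite -mulr2n mulrn_eq0 /= => /eqP.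
have Hw : L *m phi = 2%:R *: ('i%C *: (Zj *m phi - phi *m (adjm phi *m (Zj *m phi)))).
  have := congr1 (fun M => M *m phi) HD.
  rewrite !mulmxDl -!scalemxAl !mulmxBl -!mulmxA ?Hp ?R1 Hs !mulmx1 mulmx0 addr0.
  by [].
have Ha : adjm (adjm phi *m (Zj *m phi)) = adjm phi *m (Zj *m phi).
  by rewrite !adjmM adjmK HZ mulmxA.
have HuL : adjm phi *m L = adjm (L *m phi) by rewrite adjmM HL.
rewrite -!mulmxA mulmxA mulmxA mxtrace_mulC -!mulmxA [adjm phi *m (L *m _)]mulmxA HuL Hw.
rewrite !adjmZ adjmB adjmM adjmM HZ Ha conj_i.
rewrite -!scalemxAl -!scalemxAr !scalerA.
rewrite !mulmxBl !mulmxBr -!mulmxA ?R1 ?Hp ?mulmx1.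
set a := adjm phi *m (Zj *m phi).
have -> : adjm phi *m (Zj *m (phi *m a)) = a *m a by rewrite /a !mulmxA.
rewrite subrr subr0 mxtraceZ.
have -> : (2%:R : C)^* = 2%:R by rewrite conjC_nat.
have -> : (2%:R : C) * - 'i%C * (2%:R * 'i%C) = 4%:R.
  by apply/eqP; rewrite eq_complex /=; apply/andP; split; apply/eqP; ring.
rewrite /mxtrace big_ord1 /a !mxE big_ord1 expr2 !mxE.
by [].
Qed.

Lemma sld_exist_alg k (phi : 'cV[C]_k) (Zj : 'M[C]_k) :
  adjm phi *m phi = 1%:M -> adjm Zj = Zj ->
  adjm ((2%:R : C) *: ('i%C *: (Zj *m (phi *m adjm phi) - (phi *m adjm phi) *m Zj))) =
    (2%:R : C) *: ('i%C *: (Zj *m (phi *m adjm phi) - (phi *m adjm phi) *m Zj)) /\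
  'i%C *: (Zj *m (phi *m adjm phi) - (phi *m adjm phi) *m Zj) =
    (2%:R : C)^-1 *: (((2%:R : C) *: ('i%C *: (Zj *m (phi *m adjm phi) - (phi *m adjm phi) *m Zj)))
       *m (phi *m adjm phi) + (phi *m adjm phi) *m
       ((2%:R : C) *: ('i%C *: (Zj *m (phi *m adjm phi) - (phi *m adjm phi) *m Zj)))).
Proof.
move=> Hp HZ.
have R1 : forall p (X : 'M[C]_(1, p)), adjm phi *m (phi *m X) = X.
  by move=> p X; rewrite mulmxA Hp mul1mx.
split.
  rewrite !adjmZ adjmB !adjmM adjmK HZ conj_i conjC_nat.
  by rewrite scaleNr -scalerN opprB mulmxA.
rewrite -!scalemxAl -!scalemxAr -scalerDr scalerA mulVf ?two_neq0 // scale1r.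
rewrite !mulmxBl !mulmxBr -!mulmxA ?R1 ?Hp ?mulmx1 -scalerDr.
congr (_ *: _).
rewrite !mulmxA.
by rewrite addrA subrK.
Qed.
Lemma herm_diag_real k (A : 'M[C]_k) i : adjm A = A -> A i i = ((complex.Re (A i i))%:C)%C.
Proof.
move=> /matrixP /(_ i i); rewrite !mxE; case: (A i i) => a b /= [] Hb.
apply/eqP; rewrite eq_complex /= eqxx /=; apply/eqP; lra.
Qed.

Lemma diag_mulE k p (A : 'M[C]_k) (v : 'M[C]_(k, p)) i j :
  is_diag_mx A -> (A *m v) i j = A i i * v i j.
Proof.
move=> /is_diag_mxP HA; rewrite mxE (bigD1 i) //= big1 ?addr0 // => l Hl.
by rewrite HA ?mul0r // eq_sym.
Qed.

Lemma diag_mulrE k p (A : 'M[C]_k) (v : 'M[C]_(p, k)) i j :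
  is_diag_mx A -> (v *m A) i j = v i j * A j j.
Proof.
move=> /is_diag_mxP HA; rewrite mxE (bigD1 j) //= big1 ?addr0 // => l Hl.
by rewrite HA ?mulr0.
Qed.

Definition gph k (Z : 'I_k -> 'M[C]_k) (theta : 'I_k -> R) (a : 'I_k) : R :=
  \sum_(j < k) theta j * complex.Re (Z j a a).
Arguments gph {k}.

Lemma gph_shift k (Z : 'I_k -> 'M[C]_k) theta j t a :
  gph Z (Defs.shift theta j t) a = gph Z theta a + t * complex.Re (Z j a a).
Proof.
rewrite /gph /Defs.shift; under eq_bigr => l _ do rewrite mulrDl.
rewrite big_split /=; congr (_ + _).
rewrite (bigD1 j) //= eqxx big1 ?addr0 // => l /negPf ->.
by rewrite mul0r.
Qed.

Lemma UthE k (Z : 'I_k -> 'M[C]_k) theta :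
  Uth Z theta = diag_mx (\row_a phase (gph Z theta a)).
Proof. by []. Qed.

Lemma Uth_unit k (Z : 'I_k -> 'M[C]_k) theta :
  adjm (Uth Z theta) *m Uth Z theta = 1%:M.
Proof.
rewrite UthE adjm_diag mulmx_diag; apply/matrixP => a b; rewrite !mxE.
by rewrite phaseJM.
Qed.

Lemma family_eq k (Z : 'I_k -> 'M[C]_k) (psi : 'cV[C]_k) theta :
  Defs.family Z psi theta = (Uth Z theta *m psi) *m adjm (Uth Z theta *m psi).
Proof. by rewrite /Defs.family adjmM !mulmxA. Qed.

Lemma family_entry k (Z : 'I_k -> 'M[C]_k) (psi : 'cV[C]_k) theta a b :
  Defs.family Z psi theta a b =
    phase (gph Z theta a - gph Z theta b) * (psi a 0 * (psi b 0)^*).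
Proof.
rewrite /Defs.family UthE adjm_diag mul_mx_diag mul_diag_mx !mxE big_ord1 !mxE phaseJ.
rewrite -phaseM; set x := phase _; set y := phase _. 
by rewrite mulrC !mulrA [y * _]mulrC.
Qed.
Lemma pderiv_family k (Z : 'I_k -> 'M[C]_k) psi theta j :
  is_diag_mx (Z j) -> adjm (Z j) = Z j ->
  is_pderiv (Defs.family Z psi) theta j
    ('i%C *: (Z j *m Defs.family Z psi theta - Defs.family Z psi theta *m Z j)).
Proof.
move=> Hd Hh a b.
set al := gph Z theta a - gph Z theta b.
set be := complex.Re (Z j a a) - complex.Re (Z j b b).
set c := psi a 0 * (psi b 0)^*.
have Ef : forall t, Defs.family Z psi (Defs.shift theta j t) a b = phase (al + t * be) * c.
  move=> t; rewrite family_entry !gph_shift; congr (phase _ * _); rewrite /al /be; ring.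
have ED : ('i%C *: (Z j *m Defs.family Z psi theta - Defs.family Z psi theta *m Z j)) a b
    = 'i%C * (be%:C)%C * phase al * c.
  have h1 := @diag_mulE k k (Z j) (Defs.family Z psi theta) a b Hd.
  have h2 := @diag_mulrE k k (Z j) (Defs.family Z psi theta) a b Hd.
  rewrite mxE in h1; rewrite mxE in h2.
  rewrite !mxE h1 h2 family_entry -/al -/c.
  rewrite [Z j a a](@herm_diag_real k (Z j) a Hh) [Z j b b](@herm_diag_real k (Z j) b Hh) /be realCB.
  ring.
split.
  have -> : (fun t => complex.Re (Defs.family Z psi (Defs.shift theta j t) a b)) =
      (fun t => complex.Re (phase (al + t * be) * c)) by apply/funext => t; rewrite Ef.
  rewrite ED; exact: deriv_phase_Re.
have -> : (fun t => complex.Im (Defs.family Z psi (Defs.shift theta j t) a b)) =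
    (fun t => complex.Im (phase (al + t * be) * c)) by apply/funext => t; rewrite Ef.
rewrite ED; exact: deriv_phase_Im.
Qed.

Lemma pderiv_uniq k (fam : ('I_k -> R) -> 'M[C]_k) theta j D1 D2 :
  is_pderiv fam theta j D1 -> is_pderiv fam theta j D2 -> D1 = D2.
Proof.
move=> H1 H2; apply/matrixP => a b.
have [r1 i1] := H1 a b; have [r2 i2] := H2 a b.
have e1 := @derive_val _ _ _ _ _ _ _ r1; have e2 := @derive_val _ _ _ _ _ _ _ r2.
have f1 := @derive_val _ _ _ _ _ _ _ i1; have f2 := @derive_val _ _ _ _ _ _ _ i2.
move: e1 e2 f1 f2; case: (D1 a b) => x1 y1; case: (D2 a b) => x2 y2 /= -> -> -> ->.
by [].
Qed.
Lemma Uth_apply k (Z : 'I_k -> 'M[C]_k) theta (psi : 'cV[C]_k) a :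
  (Uth Z theta *m psi) a 0 = phase (gph Z theta a) * psi a 0.
Proof. by rewrite UthE mul_diag_mx !mxE. Qed.

Lemma quad_diag k (Z : 'I_k -> 'M[C]_k) theta (psi : 'cV[C]_k) (A : 'M[C]_k) :
  is_diag_mx A -> adjm A = A ->
  (adjm (Uth Z theta *m psi) *m (A *m (Uth Z theta *m psi))) 0 0 =
    ((\sum_a complex.Re (A a a) * abs2 (psi a 0))%:C)%C.
Proof.
move=> Hd Hh; rewrite realC_sum mxE; apply: eq_bigr => a _.
have hU := Uth_apply k Z theta psi a; rewrite mxE in hU.
rewrite diag_mulE // !mxE hU [A a a](@herm_diag_real k A a Hh) /=.
set r := complex.Re (A a a); set p := phase (gph Z theta a); set s := psi a 0.
rewrite rmorphM realCM -conjMabs2.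
have E : p^* * p = 1 by rewrite /p phaseJM.
transitivity ((r%:C)%C * (s^* * s) * (p^* * p)); first by ring.
by rewrite E mulr1.
Qed.

Lemma Re4 (X Y : R) :
  complex.Re ((4%:R : C) * ((X%:C)%C - ((Y%:C)%C) ^+ 2)) = 4%:R * (X - Y ^+ 2).
Proof. rewrite !expr2 /=. ring. Qed.
Definition qv k (Z : 'I_k -> 'M[C]_k) (psi : 'cV[C]_k) (j : 'I_k) : R :=
  \sum_a complex.Re (Z j a a) ^+ 2 * abs2 (psi a 0)
  - (\sum_a complex.Re (Z j a a) * abs2 (psi a 0)) ^+ 2.
Arguments qv {k}.

Lemma diag_sq_diag k (A : 'M[C]_k) : is_diag_mx A -> is_diag_mx (A *m A).
Proof. by move=> /diag_mxP [d ->]; rewrite mulmx_diag diag_mx_is_diag. Qed.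

Lemma sld_value k (Z : 'I_k -> 'M[C]_k) theta psi j L :
  adjm psi *m psi = 1%:M -> is_diag_mx (Z j) -> adjm (Z j) = Z j ->
  is_SLD (Defs.family Z psi) theta j L ->
  complex.Re (\tr (L *m L *m Defs.family Z psi theta)) = 4%:R * qv Z psi j.
Proof.
move=> Hpsi Hd Hh [HL [D [HD HDe]]].
have E := @pderiv_uniq k _ theta j _ _ HD (@pderiv_family k Z psi theta j Hd Hh).
rewrite E in HDe; rewrite !family_eq in HDe *.
set phi := Uth Z theta *m psi.
have Hphi : adjm phi *m phi = 1%:M.
  by rewrite /phi adjmM -mulmxA (mulmxA (adjm (Uth Z theta))) Uth_unit mul1mx.
rewrite (@sld_alg k phi (Z j) L Hphi Hh HL HDe).
have HZZh : adjm (Z j *m Z j) = Z j *m Z j by rewrite adjmM Hh.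
rewrite [Z j *m (Z j *m _)]mulmxA.
rewrite (@quad_diag k Z theta psi _ (@diag_sq_diag k _ Hd) HZZh).
rewrite (@quad_diag k Z theta psi _ Hd Hh) Re4 /qv.
congr (_ * (_ - _)); apply: eq_bigr => a _.
rewrite diag_mulE // [Z j a a](@herm_diag_real k (Z j) a Hh) /=.
by rewrite expr2 mulr0 subr0.
Qed.
Lemma unit_phi k (Z : 'I_k -> 'M[C]_k) theta (psi : 'cV[C]_k) :
  adjm psi *m psi = 1%:M ->
  adjm (Uth Z theta *m psi) *m (Uth Z theta *m psi) = 1%:M.
Proof.
by move=> Hpsi; rewrite adjmM -mulmxA (mulmxA (adjm (Uth Z theta)) (Uth Z theta)) Uth_unit mul1mx.
Qed.

Lemma sld_exists k (Z : 'I_k -> 'M[C]_k) theta (psi : 'cV[C]_k) j :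
  adjm psi *m psi = 1%:M -> is_diag_mx (Z j) -> adjm (Z j) = Z j ->
  is_SLD (Defs.family Z psi) theta j
    ((2%:R : C) *: ('i%C *: (Z j *m Defs.family Z psi theta - Defs.family Z psi theta *m Z j))).
Proof.
move=> Hpsi Hd Hh.
have [H1 H2] := @sld_exist_alg k (Uth Z theta *m psi) (Z j) (@unit_phi k Z theta psi Hpsi) Hh.
split; first by rewrite /herm_mx family_eq.
exists ('i%C *: (Z j *m Defs.family Z psi theta - Defs.family Z psi theta *m Z j)).
split; first exact: pderiv_family.
by rewrite family_eq.
Qed.

Lemma mean_uniq k (Z : 'I_k -> 'M[C]_k) theta (psi : 'cV[C]_k) v :
  adjm psi *m psi = 1%:M -> (forall j, is_diag_mx (Z j)) -> (forall j, adjm (Z j) = Z j) ->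
  mean_qfi_is (Defs.family Z psi) theta v -> v = (\sum_j 4%:R * qv Z psi j) / k%:R.
Proof.
move=> Hpsi Hd Hh [L [HL ->]].
rewrite /mxtrace; congr (_ / _); apply: eq_bigr => j _; rewrite mxE.
exact: sld_value.
Qed.

Lemma mean_exists k (Z : 'I_k -> 'M[C]_k) theta (psi : 'cV[C]_k) :
  adjm psi *m psi = 1%:M -> (forall j, is_diag_mx (Z j)) -> (forall j, adjm (Z j) = Z j) ->
  mean_qfi_is (Defs.family Z psi) theta ((\sum_j 4%:R * qv Z psi j) / k%:R).
Proof.
move=> Hpsi Hd Hh.
exists (fun j => (2%:R : C) *: ('i%C *: (Z j *m Defs.family Z psi theta - Defs.family Z psi theta *m Z j))).
have HS : forall j, is_SLD (Defs.family Z psi) theta j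
    ((2%:R : C) *: ('i%C *: (Z j *m Defs.family Z psi theta - Defs.family Z psi theta *m Z j))).
  by move=> j; apply: sld_exists.
split => //.
rewrite /mxtrace; congr (_ / _); apply: eq_bigr => j _; rewrite mxE.
by rewrite (@sld_value k Z theta psi j _ Hpsi (Hd j) (Hh j) (HS j)).
Qed.
Lemma sum_qv k (Z : 'I_k -> 'M[C]_k) (psi : 'cV[C]_k) :
  (forall j, is_diag_mx (Z j)) -> (forall j, adjm (Z j) = Z j) ->
  (forall j l, \tr (Z j *m Z l) = (j == l)%:R) -> adjm psi *m psi = 1%:M ->
  \sum_j qv Z psi j = 1 - \sum_a abs2 (psi a 0) ^+ 2.
Proof.
move=> Hd Hh Ho Hpsi.
pose z j a := complex.Re (Z j a a).
pose w a := abs2 (psi a 0).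
have Hrow : forall j l, \sum_a z j a * z l a = (j == l)%:R.
  move=> j l; have := Ho j l; rewrite /mxtrace.
  under eq_bigr => a _ do rewrite diag_mulE // [Z j a a](@herm_diag_real k (Z j) a (Hh j))
     [Z l a a](@herm_diag_real k (Z l) a (Hh l)) -realCM.
  rewrite -realC_sum => /(congr1 (@complex.Re R)) /= ->.
  by case: (j == l).
pose M := \matrix_(j < k, a < k) z j a.
have HM : M *m M^T = 1%:M.
  apply/matrixP => j l; rewrite !mxE.
  under eq_bigr => a _ do rewrite !mxE.
  by rewrite Hrow.
have HM' := mulmx1C HM.
have Hcol : forall a b, \sum_j z j a * z j b = (a == b)%:R.
  move=> a b; have := congr1 (fun X : 'M[R]_k => X a b) HM'; rewrite !mxE /= => <-.
  by apply: eq_bigr => j _; rewrite !mxE.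
have Hw : \sum_a w a = 1.
  have := congr1 (fun X : 'M[C]_1 => X 0 0) Hpsi; rewrite !mxE /=.
  under eq_bigr => a _ do rewrite !mxE conjMabs2.
  by rewrite -realC_sum => /(congr1 (@complex.Re R)) /=.
rewrite /qv big_split /= sumrN.
have -> : \sum_j \sum_a complex.Re (Z j a a) ^+ 2 * abs2 (psi a 0) = 1.
  rewrite exchange_big /= -Hw; apply: eq_bigr => a _.
  rewrite -mulr_suml; have H1 : \sum_j z j a * z j a = 1 by rewrite Hcol eqxx.
  rewrite /w -[X in _ = X]mul1r -H1; congr (_ * _); apply: eq_bigr => j _; by rewrite expr2.
congr (_ - _).
transitivity (\sum_j \sum_a \sum_b (w a * w b) * (z j a * z j b)).
  apply: eq_bigr => j _; rewrite expr2 mulr_suml; apply: eq_bigr => a _.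
  rewrite mulr_sumr; apply: eq_bigr => b _; rewrite /w /z; ring.
rewrite exchange_big /=; apply: eq_bigr => a _.
rewrite exchange_big /=.
under eq_bigr => b _ do rewrite -mulr_sumr Hcol.
rewrite (bigD1 a) //= eqxx big1 ?addr0 ?mulr1 ?expr2 //.
by move=> b /negPf; rewrite eq_sym => ->; rewrite mulr0.
Qed.
Lemma ReD (x y : C) : complex.Re (x + y) = complex.Re x + complex.Re y.
Proof. by case: x; case: y. Qed.

Lemma pure_val k (Z : 'I_k -> 'M[C]_k) (psi : 'cV[C]_k) :
  (forall j, is_diag_mx (Z j)) -> (forall j, adjm (Z j) = Z j) ->
  (forall j l, \tr (Z j *m Z l) = (j == l)%:R) -> adjm psi *m psi = 1%:M ->
  (\sum_j 4%:R * qv Z psi j) / k%:R = 4%:R / k%:R * (1 - \sum_a abs2 (psi a 0) ^+ 2).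
Proof. by move=> Hd Hh Ho Hpsi; rewrite -mulr_sumr sum_qv // mulrAC. Qed.

Lemma ens_exists k (rho : 'M[C]_k) : is_state rho ->
  exists (p : 'I_k -> R) (psi : 'I_k -> 'cV[C]_k), ensemble rho p psi.
Proof.
case => Hh Hpsd Htr.
have Hn : rho \is normalmx.
  apply/normalmxP; have E : map_mx Num.conj rho^T = rho := Hh.
  by rewrite E.
have Erho := orthomx_spectralP Hn.
set P := spectralmx rho in Erho; set d := spectral_diag rho in Erho.
have HPu : P *m adjm P = 1%:M by apply/unitarymxP; exact: spectral_unitarymx.
have HPu' : adjm P *m P = 1%:M := mulmx1C HPu.
rewrite invmx_unitary ?spectral_unitarymx // -/P in Erho.
have ErhoE : rho = adjm P *m diag_mx d *m P := Erho.
pose psi (l : 'I_k) : 'cV[C]_k := adjm (row l P).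
have Hdiag : P *m rho *m adjm P = diag_mx d.
  by rewrite ErhoE !mulmxA HPu mul1mx -mulmxA HPu mulmx1.
have Hd : forall l, d 0 l = (adjm (psi l) *m rho *m psi l) 0 0.
  move=> l; have := congr1 (fun X : 'M[C]_k => X l l) Hdiag.
  rewrite /= [diag_mx _ _ _]mxE eqxx mulr1n => <-.
  rewrite /psi adjmK !mxE; apply: eq_bigr => j _; rewrite !mxE; congr (_ * _).
  by apply: eq_bigr => i _; rewrite !mxE.
have Hd0 : forall l, 0 <= d 0 l by move=> l; rewrite Hd; exact: Hpsd.
have HdR : forall l, d 0 l = ((complex.Re (d 0 l))%:C)%C.
  move=> l; have := Hd0 l; rewrite lecE /=; case: (d 0 l) => x y /= /andP [/eqP -> _].
  by [].
exists (fun l => complex.Re (d 0 l)), psi; split.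
- by move=> l; have := Hd0 l; rewrite lecE => /andP [_ ]; rewrite /=.
- have : \tr rho = \sum_l d 0 l.
    rewrite ErhoE mxtrace_mulC mulmxA HPu mul1mx /mxtrace.
    by apply: eq_bigr => l _; rewrite mxE eqxx mulr1n.
  rewrite Htr => /(congr1 (@complex.Re R)) /= ->.
  by elim/big_rec2: _ => // l y1 y2 _ ->; rewrite ReD.
- move=> l; rewrite /psi adjmK.
  have := congr1 (fun X : 'M[C]_k => X l l) HPu; rewrite /= [1%:M l l]mxE eqxx mulr1n => H1.
  apply/matrixP => i j; rewrite !ord1 !mxE /= mulr1n -H1 !mxE.
  by apply: eq_bigr => b _; rewrite !mxE.
- rewrite [LHS]ErhoE; apply/matrixP => a b.
  rewrite mul_mx_diag summxE mxE; apply: eq_bigr => l _.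
  rewrite !mxE big_ord1 !mxE conjCK -HdR; ring.
Qed.
Lemma sum_w k (psi : 'cV[C]_k) : adjm psi *m psi = 1%:M -> \sum_a abs2 (psi a 0) = 1.
Proof.
move=> Hpsi; have := congr1 (fun X : 'M[C]_1 => X 0 0) Hpsi; rewrite !mxE /=.
under eq_bigr => a _ do rewrite !mxE conjMabs2.
by rewrite -realC_sum => /(congr1 (@complex.Re R)) /=.
Qed.

Lemma ipr_le1 k (psi : 'cV[C]_k) : adjm psi *m psi = 1%:M ->
  \sum_a abs2 (psi a 0) ^+ 2 <= 1.
Proof.
move=> Hpsi; rewrite -(@sum_w k psi Hpsi); apply: ler_sum => a _.
have H0 := abs2_ge0 (psi a 0).
have H1 : abs2 (psi a 0) <= 1.
  rewrite -(@sum_w k psi Hpsi) (bigD1 a) //= lerDl; apply: sumr_ge0 => b _; exact: abs2_ge0.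
by rewrite expr2 ler_piMr.
Qed.

Lemma sum_affine m (p : 'I_m -> R) (x : 'I_m -> R) (K : R) :
  \sum_l p l = 1 -> \sum_l p l * (K * (1 - x l)) = K * (1 - \sum_l p l * x l).
Proof.
move=> Hp; transitivity (\sum_l K * (p l - p l * x l)).
  by apply: eq_bigr => l _; ring.
by rewrite -mulr_sumr sumrB Hp.
Qed.

Local Open Scope classical_set_scope.

Lemma sup_affine (S : set R) (K : R) : 0 < K -> S !=set0 -> has_ubound S ->
  sup [set K * y - K | y in S] = K * sup S - K.
Proof.
move=> K0 S0 Sub.
have hs : has_sup S by split.
have ub : ubound [set K * y - K | y in S] (K * sup S - K).
  move=> _ [y Sy <-]; rewrite lerD2r ler_pM2l //; exact: sup_upper_bound.
have g0 : [set K * y - K | y in S] !=set0.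
  by case: S0 => y Sy; exists (K * y - K), y.
apply/le_anti/andP; split; first exact: ge_sup.
rewrite leNgt; apply/negP => H.
have H2 : (sup [set K * y - K | y in S] + K) / K < sup S.
  by rewrite ltr_pdivrMr // mulrC -ltrBrDr.
have [y Sy Hy] := sup_gt S0 H2.
have : K * y - K <= sup [set K * y - K | y in S].
  apply: sup_upper_bound; [split => //; by exists (K * sup S - K)| by exists y].
rewrite lerBlDr => H3.
move: Hy; rewrite ltr_pdivrMr // mulrC => H4.
by move: (lt_le_trans H4 H3); rewrite ltxx.
Qed.
Lemma main_aux (n : nat) (Z : 'I_n -> 'M[C]_n) (theta : 'I_n -> R) (rho : 'M[C]_n) :
  (forall j, is_diag_mx (Z j)) ->
  (forall j, herm_mx (Z j)) ->
  (forall j k, \tr (Z j *m Z k) = (j == k)%:R) ->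
  is_state rho ->
  Ccoh Z theta rho = 4%:R / n%:R * (1 - sup (ipr_values rho)).
Proof.
move=> Hd Hh Ho Hst.
have Hh' : forall j, adjm (Z j) = Z j := Hh.
have n0 : (0 < n)%N.
  case: Hst => _ _ Htr; rewrite lt0n; apply/negP => /eqP n0.
  have T0 : \tr rho = 0.
    by rewrite /mxtrace big1 // => i _; have := ltn_ord i; rewrite {2}n0.
  by move: Htr; rewrite T0 => /eqP; rewrite eq_sym oner_eq0.
set K : R := 4%:R / n%:R.
have K0 : 0 < K by rewrite /K divr_gt0 // ltr0n.
have Hval : forall psi : 'cV[C]_n, adjm psi *m psi = 1%:M ->
    forall v, mean_qfi_is (Defs.family Z psi) theta v <->
      v = K * (1 - \sum_a abs2 (psi a 0) ^+ 2).
  move=> psi Hpsi v; split.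
    by move=> Hm; rewrite (@mean_uniq n Z theta psi v Hpsi Hd Hh' Hm) pure_val.
  move=> ->; rewrite /K -(@pure_val n Z psi Hd Hh' Ho Hpsi).
  exact: mean_exists.
have QS : [set - x | x in qfi_values Z theta rho] = [set K * y - K | y in ipr_values rho].
  apply/seteqP; split.
    move=> _ [x [m [p [psi [Hens [v [Hv ->]]]]]] <-].
    have [Hp0 Hp1 Hu _] := Hens.
    exists (\sum_l p l * \sum_a abs2 (psi l a 0) ^+ 2).
      by exists m, p, psi.
    have -> : \sum_l p l * v l = \sum_l p l * (K * (1 - \sum_a abs2 (psi l a 0) ^+ 2)).
      by apply: eq_bigr => l _; rewrite ((Hval _ (Hu l) (v l)).1 (Hv l)).
    rewrite sum_affine //; ring.
  move=> _ [y [m [p [psi [Hens ->]]]] <-].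
  have [Hp0 Hp1 Hu _] := Hens.
  exists (\sum_l p l * (K * (1 - \sum_a abs2 (psi l a 0) ^+ 2))).
    exists m, p, psi; split => //.
    exists (fun l => K * (1 - \sum_a abs2 (psi l a 0) ^+ 2)); split => //.
    by move=> l; rewrite Hval.
  rewrite sum_affine //; ring.
have S0 : ipr_values rho !=set0.
  have [p [psi Hens]] := @ens_exists n rho Hst.
  by exists (\sum_l p l * \sum_a abs2 (psi l a 0) ^+ 2), n, p, psi.
have Sub : has_ubound (ipr_values rho).
  exists 1 => _ [m [p [psi [[Hp0 Hp1 Hu _] ->]]]].
  rewrite -Hp1; apply: ler_sum => l _.
  by rewrite -[X in _ <= X]mulr1 ler_wpM2l // ipr_le1.
rewrite /Ccoh /inf QS sup_affine //; ring.
Qed.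

End Main.

Theorem mainTheorem5 (R : realType) (n : nat) (Z : 'I_n -> 'M[R[i]]_n)
    (theta : 'I_n -> R) (rho : 'M[R[i]]_n) :
  (forall j, is_diag_mx (Z j)) ->
  (forall j, herm_mx (Z j)) ->
  (forall j k, \tr (Z j *m Z k) = (j == k)%:R) ->
  is_state rho ->
  Ccoh Z theta rho = 4%:R / n%:R * (1 - sup (ipr_values rho)).
Proof. exact: main_aux. Qed.
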